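(* Let $G$ be a graph of order $n\ge 4$ with no isolated vertices. Then $G$ is a galaxy if and only if $b_{OCD}(G)=|E(G)|$.
   Context: A galaxy is a forest in which every connected component is a star $K_{1,r}$ with $r\ge 1$. A set $S\subseteq V$ is a dominating set of a graph $G=(V,E)$ if every vertex not in $S$ is adjacent to a vertex of $S$. A set $\tilde D\subseteq V$ is an outer-connected dominating set of $G$ if $\tilde D$ is dominating and the induced subgraph $G[V\setminus\tilde D]$ is connected (the empty graph counts as connected). $\tilde\gamma_c(G)$ is the minimum size of an outer-connected dominating set. For a graph $G$ without isolated vertices, the outer-connected bondage number $b_{OCD}(G)$ is the minimum number of edges whose removal from $G$ yields a graph $G'$ with $\tilde\gamma_c(G')>\tilde\gamma_c(G)$. *)

(* Defs.v *)
(* A simple graph on a finite vertex type T is given by its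
   edge set E : {set {set T}}, every edge being a 2-element subset of T. *)
From mathcomp Require Import all_boot.
Set Implicit Arguments. Unset Strict Implicit. Unset Printing Implicit Defensive.

Section Graphs.
Variable T : finType.
Implicit Types (E F : {set {set T}}) (S D U C : {set T}).

Definition simple_edges E : Prop := forall e, e \in E -> #|e| = 2.

Definition adj E : rel T := fun x y => (x != y) && ([set x; y] \in E).

Definition no_isolated E : Prop := forall x, exists y, adj E x y.

Definition dominating E S : bool :=
  [forall x, (x \notin S) ==> [exists y in S, adj E x y]].

(* the induced subgraph G[U] is connected (empty graph counts as connected) *)
Definition induced_connected E U : bool :=
  [forall x in U, forall y in U,
     connect (fun a b => [&& a \in U, b \in U & adj E a b]) x y].

Definition ocd E D : bool := dominating E D && induced_connected E (~: D).

(* outer-connected domination number; V itself is always an ocd set, so the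
   initial value #|T| does not affect the minimum *)
Definition gamma_oc E : nat := \big[minn/#|T|]_(D : {set T} | ocd E D) #|D|.

Definition is_bOCD E (k : nat) : Prop :=
  (exists2 F : {set {set T}}, F \subset E & (#|F| = k /\ gamma_oc E < gamma_oc (E :\: F)))
  /\ (forall F : {set {set T}}, F \subset E -> gamma_oc E < gamma_oc (E :\: F) -> k <= #|F|).

Definition is_star E C : Prop :=
  2 <= #|C| /\
  exists2 c, c \in C & forall x y, x \in C -> y \in C ->
     adj E x y = ((x == c) && (y != c)) || ((y == c) && (x != c)).

(* galaxy: every connected component is a star K_{1,r}, r >= 1
   (such a graph is automatically a forest) *)
Definition galaxy E : Prop :=
  forall x, is_star E [set y | connect (adj E) x y].

End Graphs.

(* Main.v *)
Require Import Defs.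
From mathcomp Require Import all_boot.
From mathcomp Require Import zify.
Set Implicit Arguments. Unset Strict Implicit. Unset Printing Implicit Defensive.

Section Proof.
Variable T : finType.
Implicit Types (E F : {set {set T}}) (D : {set T}).

Lemma adjC E x y : adj E x y = adj E y x.
Proof. by rewrite /adj eq_sym setUC. Qed.

Lemma adj_neq E x y : adj E x y -> x != y.
Proof. by case/andP. Qed.

Lemma gamma_le E D : ocd E D -> gamma_oc E <= #|D|.
Proof.
move=> H; rewrite /gamma_oc -big_filter.
have : D \in [seq x <- index_enum _ | ocd E x] by rewrite mem_filter H mem_index_enum.
elim: [seq x <- index_enum _ | ocd E x] => // y s IH; rewrite in_cons big_cons.
case/orP => [/eqP <-|hs]; first exact: geq_minl.
exact: leq_trans (geq_minr _ _) (IH hs).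
Qed.

Lemma gamma_ge E k : k <= #|T| -> (forall D, ocd E D -> k <= #|D|) -> k <= gamma_oc E.
Proof.
move=> hk H; rewrite /gamma_oc; apply: (big_ind (fun m => k <= m)) => //.
by move=> a b ha hb; rewrite leq_min ha hb.
Qed.

Lemma gamma_edge E u v : adj E u v -> gamma_oc E <= #|T|.-1.
Proof.
move=> huv; have nuv := adj_neq huv.
rewrite -(cardsC1 u); apply: gamma_le; apply/andP; split.
- apply/forallP => x; apply/implyP; rewrite in_setC in_set1 negbK => /eqP ->.
  apply/existsP; exists v; rewrite in_setC in_set1 eq_sym nuv huv //.
- apply/forallP => x; apply/implyP; rewrite setCK in_set1 => /eqP->.
  apply/forallP => y; apply/implyP; rewrite in_set1 => /eqP->; exact: connect0.
Qed.

Definition leafy E := forall a b, adj E a b ->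
  (forall z, adj E a z -> z = b) \/ (forall z, adj E b z -> z = a).

Lemma leafy_dom E D a b : leafy E -> dominating E D -> adj E a b ->
  a \notin D -> b \notin D -> False.
Proof.
move=> hl /forallP hD hab ha hb.
have key : forall x y, (forall z, adj E x z -> z = y) -> x \notin D -> y \notin D -> False.
  move=> x y hx hxD hyD; move: (hD x); rewrite hxD /= => /existsP [z /andP [zD hxz]].
  by rewrite (hx z hxz) (negbTE hyD) in zD.
by case: (hl a b hab) => h; [apply: (key a b) | apply: (key b a)].
Qed.

Lemma gamma_leafy E : leafy E -> #|T|.-1 <= gamma_oc E.
Proof.
move=> hl; apply: gamma_ge; first exact: leq_pred.
move=> D /andP [hD hC].
have h1 : #|~: D| <= 1.
  case: (set_0Vmem (~: D)) => [->|[x hx]]; first by rewrite cards0.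
  rewrite -(cards1 x); apply: subset_leq_card; apply/subsetP => y hy; rewrite in_set1.
  case: eqP => // /eqP nyx; exfalso.
  move/forallP: hC => /(_ x); rewrite hx /= => /forallP /(_ y); rewrite hy /=.
  case/connectP => p hp hlast.
  case: p hp hlast => [|z p] /=; first by move=> _ e; rewrite e eqxx in nyx.
  move=> /andP [/and3P [_ hz hxz] _] _.
  apply: (leafy_dom hl hD hxz); by rewrite -in_setC.
have := cardsC D; lia.
Qed.

Lemma gamma_empty E : (forall x y, ~~ adj E x y) -> #|T| <= gamma_oc E.
Proof.
move=> h0; apply: gamma_ge => // D /andP [/forallP hD _].
rewrite -cardsT; apply: subset_leq_card; apply/subsetP => x _.
apply/negPn/negP => hx; move: (hD x); rewrite hx /= => /existsP [y /andP [_ hy]].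
by move: (h0 x y); rewrite hy.
Qed.

Lemma gamma_pair E u v a b : adj E u v -> adj E u a -> a != v ->
  adj E v b -> b != u -> gamma_oc E <= #|T| - 2.
Proof.
move=> huv hua nav hvb nbu; have nuv := adj_neq huv.
have nua := adj_neq hua; have nvb := adj_neq hvb.
have -> : #|T| - 2 = #|~: [set u; v]|.
  have := cardsC [set u; v]; rewrite cards2 nuv; lia.
apply: gamma_le; apply/andP; split.
- apply/forallP => x; apply/implyP; rewrite in_setC in_set2 negbK.
  case/orP => /eqP ->; apply/existsP.
  + exists a; rewrite in_setC in_set2 hua andbT negb_or nav andbT eq_sym //.
  + exists b; rewrite in_setC in_set2 hvb andbT negb_or nbu /= eq_sym //.
- rewrite setCK; apply/forallP => x; apply/implyP; rewrite in_set2.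
  move=> hx; apply/forallP => y; apply/implyP; rewrite in_set2 => hy.
  case/orP: hx => /eqP ->; case/orP: hy => /eqP ->; rewrite ?connect0 //;
   apply: connect1; rewrite !in_set2 !eqxx ?orbT /= ?huv // adjC huv //.
Qed.

Lemma galaxy_leafy E : galaxy E -> leafy E.
Proof.
move=> hg a b hab; case: (hg a) => _ [c hc hstar].
have ha : a \in [set y | connect (adj E) a y] by rewrite inE connect0.
have hb : b \in [set y | connect (adj E) a y] by rewrite inE connect1.
move: (hstar a b ha hb); rewrite hab.
case: (eqVneq a c) => [eac|nac]; case: (eqVneq b c) => [ebc|nbc] //=.
- move=> _; right => z hbz.
  have hz : z \in [set y | connect (adj E) a y].
    by rewrite inE (connect_trans (connect1 hab) (connect1 hbz)).
  move: (hstar b z hb hz); rewrite hbz (negbTE nbc) /= andbT.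
  by case: eqP => // -> _; rewrite eac.
- move=> _; left => z haz.
  have hz : z \in [set y | connect (adj E) a y] by rewrite inE connect1.
  move: (hstar a z ha hz); rewrite haz (negbTE nac) /= andbT.
  by case: eqP => // -> _; rewrite ebc.
Qed.

Lemma star_comp E a b x : leafy E -> adj E a b -> (forall z, adj E a z -> z = b) ->
  (x == b) || adj E b x -> is_star E [set z | connect (adj E) x z].
Proof.
move=> hl hab ha hx.
have hN : forall w, adj E b w -> forall z, adj E w z -> z = b.
  move=> w hbw; case: (eqVneq w a) => [->|nwa]; first exact: ha.
  case: (hl b w hbw) => // hb; have := hb a; rewrite adjC hab => /(_ isT) e.
  by rewrite e eqxx in nwa.
have comp : [set z | connect (adj E) x z] = [set z | (z == b) || adj E b z].
  apply/setP => z; rewrite !inE; apply/idP/idP.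
  - move=> hxz.
    have cl : closed (adj E) [pred z | (z == b) || adj E b z].
      have one : forall y w, adj E y w -> (y == b) || adj E b y -> (w == b) || adj E b w.
        move=> y w hyw /orP [/eqP ey|hby].
        + by rewrite -ey hyw orbT.
        + by rewrite (hN y hby w hyw) eqxx.
      move=> y w hyw; apply/idP/idP; first exact: one.
      by apply: one; rewrite adjC.
    by have := closed_connect cl hxz; rewrite !inE /= hx => <-.
  - move=> hz; apply: (connect_trans (y:=b)).
    + case/orP: hx => [/eqP ->|hbx]; first exact: connect0.
      by apply: connect1; rewrite adjC.
    + case/orP: hz => [/eqP ->|hbz]; first exact: connect0.
      exact: connect1.
rewrite comp; split.
  apply: (@leq_trans #|[set a; b]|); first by rewrite cards2 (adj_neq hab).
  apply: subset_leq_card; apply/subsetP => y; rewrite in_set2 inE.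
  by case/orP => /eqP ->; rewrite ?eqxx // adjC hab orbT.
exists b; first by rewrite inE eqxx.
move=> x0 y0; rewrite !inE.
case: (eqVneq x0 b) => [->|nx]; case: (eqVneq y0 b) => [->|ny] //=.
- by move=> _ _; rewrite /adj eqxx.
- by move=> h _; rewrite adjC h.
- move=> hbx _; apply/negbTE/negP => h.
  by move: ny; rewrite (hN x0 hbx y0 h) eqxx.
Qed.

Lemma adj_one E e x y : adj (E :\: (E :\ e)) x y -> [set x; y] = e.
Proof. by case/andP => _; rewrite !inE => /andP [/nandP [/negPn/eqP ->|/negP//] _]. Qed.

Lemma set2_inj (x y z : T) : x != z -> [set x; z] = [set x; y] -> z = y.
Proof.
move=> nxz h; have : z \in [set x; y] by rewrite -h set22.
by rewrite in_set2 eq_sym (negbTE nxz) /= => /eqP.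
Qed.

Lemma leafy_one E e : leafy (E :\: (E :\ e)).
Proof.
move=> x y hxy; left => z hxz.
apply: (set2_inj (adj_neq hxz)); by rewrite (adj_one hxz) (adj_one hxy).
Qed.

End Proof.

Theorem mainTheorem11 (T : finType) (E : {set {set T}}) :
  simple_edges E -> 4 <= #|T| -> no_isolated E ->
  (galaxy E <-> is_bOCD E #|E|).
Proof.
move=> hs hT hni.
have [x0 _] : exists x : T, x \in [set: T].
  by apply/card_gt0P; rewrite cardsT; lia.
have [y0 hxy0] := hni x0.
split.
- move=> hg; have hl := galaxy_leafy hg; split.
  + exists E => //; split => //.
    apply: (leq_ltn_trans (gamma_edge hxy0)); rewrite setDv.
    apply: (leq_trans _ (gamma_empty _)); first by lia.
    by move=> x y; rewrite /adj in_set0 andbF.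
  + move=> F hFE hlt; rewrite leqNgt; apply/negP => hlt2.
    case: (set_0Vmem (E :\: F)) => [h0|[e he]].
      have : E \subset F by rewrite -setD_eq0 h0.
      by move/subset_leq_card; rewrite leqNgt hlt2.
    have heE : e \in E by case/setDP: he.
    have /cards2P [u [v [nuv eq]]] : #|e| == 2 by rewrite hs.
    have huv : adj (E :\: F) u v by rewrite /adj nuv -eq he.
    have := leq_trans (gamma_edge huv) (gamma_leafy hl); by rewrite leqNgt hlt.
- case=> _ hmin.
  have hl : leafy E.
    move=> a b hab.
    case ha: [forall z, adj E a z ==> (z == b)].
      by left => z hz; move/forallP: ha => /(_ z); rewrite hz => /eqP.
    case hb: [forall z, adj E b z ==> (z == a)].
      by right => z hz; move/forallP: hb => /(_ z); rewrite hz => /eqP.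
    exfalso.
    move/negbT/forallPn: ha => [z]; rewrite negb_imply => /andP [haz nzb].
    move/negbT/forallPn: hb => [w]; rewrite negb_imply => /andP [hbw nwa].
    have heE : [set a; b] \in E by case/andP: hab.
    have h1 := gamma_pair hab haz nzb hbw nwa.
    have h2 := gamma_leafy (@leafy_one _ E [set a; b]).
    have h3 := cardsD1 [set a; b] E; rewrite heE add1n in h3.
    have h4 : #|E| <= #|E :\ [set a; b]|.
      apply: hmin (subD1set E _) _.
      apply: (leq_ltn_trans h1); apply: leq_trans h2; lia.
    by rewrite h3 ltnn in h4.
  move=> x; have [y hxy] := hni x.
  case: (hl x y hxy) => h.
    by apply: (star_comp hl hxy h); rewrite adjC hxy orbT.
  by apply: (star_comp hl (_ : adj E y x) h); rewrite ?eqxx // adjC.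
Qed.
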